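(* Setting: $n$ agents on a connected, undirected weighted graph $\mathcal G$ with symmetric adjacency weights $a_{i,j}$ and Laplacian $L_n$; $L=L_n\otimes I_m$. For each $i$, $\Omega_i\subset\mathbb R^{q_i}$ is closed and convex, $f^i$ is strictly convex on an open set containing $\Omega_i$, $W_i\in\mathbb R^{m\times q_i}$, $d_i\in\mathbb R^m$, $\sum_i d_i=d_0$; $\Omega=\prod_i\Omega_i$, $f(x)=\sum_if^i(x_i)$, $W=[W_1,\dots,W_n]$, $\overline W=\mathrm{diag}\{W_1,\dots,W_n\}$, $d=[d_1^{\rm T},\dots,d_n^{\rm T}]^{\rm T}$; Slater's condition holds (some $x$ in the interior of $\Omega$ has $Wx=d_0$). Let $\mathcal F$ be the set-valued map $$\mathcal F(y,\lambda,z)=\Big\{\big(-y+x-g+\overline W^{\rm T}\lambda,\ d-\overline Wx-L\lambda-Lz,\ L\lambda\big):\ g\in\partial f(x),\ x=P_\Omega(y)\Big\}.$$ Let $x^*$ be the solution of $\min f(x)$ s.t. $Wx=d_0$, $x\in\Omega$, and let $(y^*,\lambda^*,z^* )$ be an equilibrium of $\dot\xi\in\mathcal F(\xi)$ (i.e. $0\in\mathcal F(y^*,\lambda^*,z^* )$) with $x^*=P_\Omega(y^* )$. Define $$V(y,\lambda,z)=\tfrac12\big(\|y-P_\Omega(y^* )\|^2-\|y-P_\Omega(y)\|^2\big)+\tfrac12\|\lambda-\lambda^*\|^2+\tfrac12\|z-z^*\|^2.$$ If $a\in\mathcal L_{\mathcal F}V(y,\lambda,z)$, then there exist $g(x)\in\partial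 f(x)$ and $g(x^* )\in\partial f(x^* )$, with $x=P_\Omega(y)$, such that $$a\le -(x-x^* )^{\rm T}(g(x)-g(x^* ))-\lambda^{\rm T}L\lambda\le 0.$$
   Context: $\partial f$ is the convex subdifferential; $P_\Omega$ the Euclidean projection onto $\Omega$. For a locally Lipschitz $V$ with Clarke generalized gradient $\partial V$, the set-valued Lie derivative is $\mathcal L_{\mathcal F}V(\xi)=\{a\in\mathbb R:\ \exists v\in\mathcal F(\xi)\text{ with } p^{\rm T}v=a\ \forall p\in\partial V(\xi)\}$. *)

(* Defs.v *)
From HB Require Import structures.
From mathcomp Require Import all_boot all_order all_algebra.
From mathcomp Require Import all_classical all_reals all_analysis.
Set Implicit Arguments. Unset Strict Implicit. Unset Printing Implicit Defensive.
Import Order.TTheory GRing.Theory Num.Theory.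
Import numFieldNormedType.Exports.
Local Open Scope classical_set_scope.
Local Open Scope ring_scope.

Definition cdot {R : realType} {k : nat} (u v : 'cV[R]_k) : R :=
  \sum_(l < k) u l 0 * v l 0.

Definition vecX (R : realType) (n : nat) (q : 'I_n -> nat) :=
  forall i : 'I_n, 'cV[R]_(q i).
Definition vecL (R : realType) (n m : nat) := 'I_n -> 'cV[R]_m.

Definition dotX {R : realType} {n} {q : 'I_n -> nat} (x y : vecX R q) : R :=
  \sum_(i < n) cdot (x i) (y i).
Definition dotL {R : realType} {n m} (x y : vecL R n m) : R :=
  \sum_(i < n) cdot (x i) (y i).

Definition subX {R : realType} {n} {q : 'I_n -> nat} (x y : vecX R q) : vecX R q :=
  fun i => x i - y i.
Definition subL {R : realType} {n m} (x y : vecL R n m) : vecL R n m :=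
  fun i => x i - y i.

Definition laplacian {R : realType} {n} (a : 'M[R]_n) : 'M[R]_n :=
  \matrix_(i, j) ((i == j)%:R * (\sum_(k < n) a i k) - a i j).

(* (L_n (x) I_m) lambda *)
Definition lapL {R : realType} {n m} (Ln : 'M[R]_n) (lam : vecL R n m) : vecL R n m :=
  fun i => \sum_(j < n) Ln i j *: lam j.

Definition convex_set' {R : realType} {k} (S : set 'cV[R]_k) : Prop :=
  forall x y, S x -> S y -> forall t : R, 0 <= t <= 1 ->
    S (t *: x + (1 - t) *: y).
Definition strictly_convex_on {R : realType} {k} (S : set 'cV[R]_k)
    (f : 'cV[R]_k -> R) : Prop :=
  forall x y, S x -> S y -> x != y -> forall t : R, 0 < t < 1 ->
    f (t *: x + (1 - t) *: y) < t * f x + (1 - t) * f y.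

Definition is_proj {R : realType} {k} (S : set 'cV[R]_k) (y x : 'cV[R]_k) : Prop :=
  S x /\ forall z, S z -> cdot (y - x) (y - x) <= cdot (y - z) (y - z).
Definition proj {R : realType} {k} (S : set 'cV[R]_k) (y : 'cV[R]_k) : 'cV[R]_k :=
  xget 0 [set x | is_proj S y x].
Definition projX {R : realType} {n} {q : 'I_n -> nat}
    (Om : forall i, set 'cV[R]_(q i)) (y : vecX R q) : vecX R q :=
  fun i => proj (Om i) (y i).

Definition fsum {R : realType} {n} {q : 'I_n -> nat}
    (f : forall i, 'cV[R]_(q i) -> R) (x : vecX R q) : R :=
  \sum_(i < n) f i (x i).

Definition subdiffX {R : realType} {n} {q : 'I_n -> nat}
    (U : forall i, set 'cV[R]_(q i)) (f : forall i, 'cV[R]_(q i) -> R)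
    (x g : vecX R q) : Prop :=
  forall z : vecX R q, (forall i, U i (z i)) ->
    fsum f x + dotX g (subX z x) <= fsum f z.

Definition WX {R : realType} {n m} {q : 'I_n -> nat}
    (W : forall i, 'M[R]_(m, q i)) (x : vecX R q) : 'cV[R]_m :=
  \sum_(i < n) W i *m x i.

Definition state (R : realType) (n m : nat) (q : 'I_n -> nat) :=
  (vecX R q * vecL R n m * vecL R n m)%type.

Definition sdot {R : realType} {n m} {q : 'I_n -> nat} (p v : state R m q) : R :=
  dotX p.1.1 v.1.1 + dotL p.1.2 v.1.2 + dotL p.2 v.2.
Definition sadd {R : realType} {n m} {q : 'I_n -> nat} (p v : state R m q) : state R m q :=
  (fun i => p.1.1 i + v.1.1 i, fun i => p.1.2 i + v.1.2 i, fun i => p.2 i + v.2 i).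
Definition sscale {R : realType} {n m} {q : 'I_n -> nat} (t : R) (v : state R m q) : state R m q :=
  (fun i => t *: v.1.1 i, fun i => t *: v.1.2 i, fun i => t *: v.2 i).
Definition ssub {R : realType} {n m} {q : 'I_n -> nat} (p v : state R m q) : state R m q :=
  (subX p.1.1 v.1.1, subL p.1.2 v.1.2, subL p.2 v.2).
Definition snorm {R : realType} {n m} {q : 'I_n -> nat} (p : state R m q) : R :=
  Num.sqrt (sdot p p).
Definition szero {R : realType} {n m} {q : 'I_n -> nat} : state R m q :=
  (fun i => 0, fun i => 0, fun i => 0).

Definition Fmap {R : realType} {n m} {q : 'I_n -> nat}
    (Ln : 'M[R]_n) (Om U : forall i, set 'cV[R]_(q i))
    (f : forall i, 'cV[R]_(q i) -> R) (W : forall i, 'M[R]_(m, q i))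
    (d : vecL R n m) (xi : state R m q) : set (state R m q) :=
  let y := xi.1.1 in let lam := xi.1.2 in let z := xi.2 in
  let x := projX Om y in
  [set v | exists g : vecX R q, subdiffX U f x g /\
     v = ((fun i => - y i + x i - g i + (W i)^T *m lam i),
          (fun i => d i - W i *m x i - lapL Ln lam i - lapL Ln z i),
          lapL Ln lam)].

(* Clarke generalized gradient, via Clarke's generalized directional
   derivative V°(xi; v) = limsup_{xi' -> xi, t -> 0+} (V(xi' + t v) - V(xi'))/t:
   p in dV(xi) iff p.v <= V°(xi; v) for all v (limsup unfolded). *)
Definition clarke_grad {R : realType} {n m} {q : 'I_n -> nat}
    (V : state R m q -> R) (xi : state R m q) : set (state R m q) :=
  [set p | forall v : state R m q, forall eps : R, 0 < eps -> forall del : R, 0 < del ->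
     exists xi' : state R m q, exists t : R,
       snorm (ssub xi' xi) < del /\ 0 < t < del /\
       sdot p v - eps < (V (sadd xi' (sscale t v)) - V xi') / t].

Definition lie_deriv {R : realType} {n m} {q : 'I_n -> nat}
    (F : state R m q -> set (state R m q)) (V : state R m q -> R)
    (xi : state R m q) : set R :=
  [set a | exists2 v, F xi v & forall p, clarke_grad V xi p -> sdot p v = a].

Definition Vfun {R : realType} {n m} {q : 'I_n -> nat}
    (Om : forall i, set 'cV[R]_(q i)) (ystar : vecX R q) (lamstar zstar : vecL R n m)
    (xi : state R m q) : R :=
  let y := xi.1.1 in let lam := xi.1.2 in let z := xi.2 in
  2^-1 * (dotX (subX y (projX Om ystar)) (subX y (projX Om ystar))
          - dotX (subX y (projX Om y)) (subX y (projX Om y)))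
  + 2^-1 * dotL (subL lam lamstar) (subL lam lamstar)
  + 2^-1 * dotL (subL z zstar) (subL z zstar).

(* Main.v *)
Require Import Defs.
From HB Require Import structures.
From mathcomp Require Import all_boot all_order all_algebra.
From mathcomp Require Import all_classical all_reals all_analysis.
From mathcomp Require Import ring lra.
Import Order.TTheory GRing.Theory Num.Theory.
Import numFieldNormedType.Exports.
Local Open Scope classical_set_scope.
Local Open Scope ring_scope.

Lemma trmx_continuous (R : realType) (k : nat) :
  continuous (fun v : 'rV[R]_k => v^T).
Proof.
move=> /= M s /= /(nbhs_ballP (M^T)) [e e0 es].
apply/nbhs_ballP; exists e => //= N MN; apply: es.
move: MN; rewrite /ball /= => -[_ H]; split => // i j; rewrite !mxE; exact: H.
Qed.

Lemma sum_cont (R : realType) (T : topologicalType) (I : Type) (s : seq I)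
  (h : I -> T -> R) : (forall i, continuous (h i)) ->
  continuous (fun v => \sum_(l <- s) h l v).
Proof.
move=> hc; elim: s => [|a s IH].
  under eq_fun do rewrite big_nil; exact: cst_continuous.
under eq_fun do rewrite big_cons.
move=> x; apply: cvgD; [exact: hc | exact: IH].
Qed.

Lemma F_cont (R : realType) k (y : 'cV[R]_k) :
  continuous (fun v : 'rV[R]_k => cdot (y - v^T) (y - v^T)).
Proof.
rewrite /cdot; apply: sum_cont => l x.
under eq_fun do rewrite !mxE.
have hc : continuous (fun v : 'rV[R]_k => y l 0 - v 0 l).
  move=> z.
  have := (@continuousB R R^o _ (fun _ : 'rV[R]_k => y l 0) (fun v : 'rV[R]_k => v 0 l) z (@cst_continuous _ _ (y l 0) z) (@coord_continuous R 1 k ord0 l z)).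
  by [].
have := @continuousM R _ (fun v : 'rV[R]_k => y l 0 - v 0 l) (fun v : 'rV[R]_k => y l 0 - v 0 l) x (hc x) (hc x).
by [].
Qed.

Lemma cdot_ge0 (R : realType) k (u : 'cV[R]_k) : 0 <= cdot u u.
Proof. by rewrite /cdot; apply: sumr_ge0 => i _; rewrite -expr2 sqr_ge0. Qed.

Lemma proj_exists (R : realType) k (S : set 'cV[R]_k) (y s0 : 'cV[R]_k) :
  closed S -> S s0 -> exists x, is_proj S y x.
Proof.
move=> Scl Ss0.
pose F := fun v : 'rV[R]_k => cdot (y - v^T) (y - v^T).
pose r := F s0^T.
pose A := [set v : 'rV[R]_k | S v^T /\ F v <= r].
pose c := fun i : 'I_k => `|y i 0| + 1 + r.
have sq_le v l : A v -> (y l 0 - v 0 l) * (y l 0 - v 0 l) <= r.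
  move=> [_ Fv]; apply: le_trans Fv; rewrite /F /cdot (bigD1 l) //= !mxE.
  by rewrite lerDl; apply: sumr_ge0 => i _; rewrite !mxE -expr2 sqr_ge0.
pose B := [set v : 'rV[R]_k | forall i, `[- c i, c i]%classic (v ord0 i)].
have cB : compact B.
  exact: (@rV_compact _ k (fun i => `[- c i, c i]%classic) (fun i => @segment_compact R (- c i) (c i))).
have AB : A `<=` B.
  move=> v Av i /=; rewrite in_itv /= -ler_norml /c.
  have := sq_le v i Av; set t := y i 0 - v 0 i => ht.
  have e1 : v 0 i = y i 0 - t by rewrite /t opprB addrC subrK.
  have r0 : 0 <= r by exact: cdot_ge0.
  rewrite e1; apply: le_trans (ler_normB _ _) _; rewrite -addrA lerD2l.
  have : `|t| <= 1 + t * t.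
    have [t0|t0] := leP 0 t; [rewrite ger0_norm // | rewrite ltr0_norm //]; nra.
  lra.
have clA : closed A.
  have -> : A = (fun v : 'rV[R]_k => v^T) @^-1` S `&` F @^-1` [set x | x <= r].
    by [].
  apply: closedI.
    by apply: preimage_closed => // x _; exact: trmx_continuous.
  by apply: preimage_closed; [move=> x _; exact: F_cont | exact: closed_le].
have cA : compact A by exact: subclosed_compact clA cB AB.
have A0 : A !=set0 by exists s0^T; split; rewrite ?trmxK //.
have [cc ccA ccmin] := compact_EVT_min A0 cA (continuous_subspaceT (@F_cont R k y)).
exists cc^T; move: ccA; rewrite inE => -[Scc Fcc]; split => // z Sz.
have -> : cdot (y - z) (y - z) = F z^T by rewrite /F trmxK.
have [Fz|Fz] := leP (F z^T) r.
  by apply: ccmin; rewrite inE; split; rewrite ?trmxK.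
by apply: le_trans Fcc _; exact: ltW.
Qed.

Ltac cdot_ring :=
  rewrite /cdot; apply/eqP; rewrite -subr_eq0; apply/eqP;
  rewrite ?opprD ?opprK ?mulrDr ?mulrN ?mulr_sumr -?sumrN -?big_split -?sumrB ?subr0 /=;
  apply: big1 => l _; rewrite !mxE; ring.

Lemma I1 (R : realType) k (a b w : 'cV[R]_k) (t : R) :
  cdot (a + t *: w - b) (a + t *: w - b) - cdot (a - b) (a - b) =
  2 * t * cdot (a - b) w + t ^+ 2 * cdot w w.
Proof. cdot_ring. Qed.

Ltac sum_ring := rewrite /dotX /dotL /subX /subL; apply/eqP; rewrite -subr_eq0; apply/eqP;
  rewrite ?opprD ?opprK ?mulrDr ?mulrN ?mulr_sumr -?sumrN -?big_split -?sumrB ?subr0 /=;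
  rewrite big1 // => i _; cdot_ring.

Lemma cdot0r (R : realType) k (u : 'cV[R]_k) : cdot u 0 = 0.
Proof. by rewrite /cdot big1 // => l _; rewrite mxE mulr0. Qed.

Lemma cdotC (R : realType) k (u v : 'cV[R]_k) : cdot u v = cdot v u.
Proof. by rewrite /cdot; apply: eq_bigr => l _; rewrite mulrC. Qed.

Lemma cdot_sumr (R : realType) k (I : finType) (u : 'cV[R]_k) (F : I -> 'cV[R]_k) :
  cdot u (\sum_j F j) = \sum_j cdot u (F j).
Proof.
rewrite /cdot exchange_big /=; apply: eq_bigr => l _.
by rewrite summxE mulr_sumr.
Qed.

Lemma cdot_scaler (R : realType) k (u v : 'cV[R]_k) (c : R) :
  cdot u (c *: v) = c * cdot u v.
Proof. rewrite /cdot mulr_sumr; apply: eq_bigr => l _; rewrite mxE; ring. Qed.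

Lemma cdot_mx (R : realType) m k (A : 'M[R]_(m, k)) (u : 'cV[R]_k) (v : 'cV[R]_m) :
  cdot u (A^T *m v) = cdot (A *m u) v.
Proof.
rewrite /cdot; under eq_bigr do rewrite mxE mulr_sumr.
under [RHS]eq_bigr do rewrite mxE mulr_suml.
rewrite exchange_big /=; apply: eq_bigr => j _; apply: eq_bigr => l _.
rewrite mxE; ring.
Qed.

Lemma proj_spec (R : realType) k (S : set 'cV[R]_k) (s0 y : 'cV[R]_k) :
  closed S -> S s0 -> is_proj S y (Defs.proj S y).
Proof.
move=> cS Ss0; rewrite /Defs.proj; apply: xgetPex.
exact: (@proj_exists R k S y s0 cS Ss0).
Qed.

Lemma var_ineq (R : realType) k (S : set 'cV[R]_k) (y x w : 'cV[R]_k) :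
  convex_set' S -> is_proj S y x -> S w -> cdot (y - x) (w - x) <= 0.
Proof.
move=> cvS [Sx Hx] Sw.
set c := cdot (y - x) (w - x); set K := cdot (w - x) (w - x).
have K0 : 0 <= K by exact: cdot_ge0.
have key t : 0 <= t <= 1 -> 2 * t * c <= t ^+ 2 * K.
  move=> t01; have := Hx _ (cvS _ _ Sw Sx t t01).
  have -> : cdot (y - (t *: w + (1 - t) *: x)) (y - (t *: w + (1 - t) *: x))
     = cdot (y - x) (y - x) - 2 * t * c + t ^+ 2 * K by rewrite /c /K; cdot_ring.
  lra.
rewrite leNgt; apply/negP => c0.
have Kc : 0 < K + c by lra.
set t := c / (K + c).
have tKc : t * (K + c) = c by rewrite /t mulrVK // unitfE gt_eqF.
have t0 : 0 <= t by rewrite /t divr_ge0 // ltW.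
have t1 : t <= 1 by rewrite /t ler_pdivrMr // mul1r; lra.
have := key t; rewrite t0 t1 => /(_ isT).
nra.
Qed.

Lemma dotL_lap (R : realType) n m (Ln : 'M[R]_n) (u v : vecL R n m) :
  dotL u (lapL Ln v) = \sum_(i < n) \sum_(j < n) Ln i j * cdot (u i) (v j).
Proof.
rewrite /dotL /lapL; apply: eq_bigr => i _; rewrite cdot_sumr.
by apply: eq_bigr => j _; rewrite cdot_scaler.
Qed.

Lemma lap_sym (R : realType) n m (Ln : 'M[R]_n) (u v : vecL R n m) :
  (forall i j, Ln i j = Ln j i) ->
  dotL u (lapL Ln v) = dotL v (lapL Ln u).
Proof.
move=> Ls; rewrite !dotL_lap exchange_big /=; apply: eq_bigr => i _.
by apply: eq_bigr => j _; rewrite Ls cdotC.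
Qed.

Lemma lap_pos (R : realType) n m (a : 'M[R]_n) (u : vecL R n m) :
  (forall i j, a i j = a j i) -> (forall i j, 0 <= a i j) ->
  0 <= dotL u (lapL (laplacian a) u).
Proof.
move=> As An; rewrite dotL_lap.
set c := fun i j => cdot (u i) (u j).
have E : \sum_(i < n) \sum_(j < n) laplacian a i j * cdot (u i) (u j) =
   \sum_(i < n) \sum_(j < n) a i j * (c i i - c i j).
  apply: eq_bigr => i _.
  rewrite (bigD1 i) //= [X in _ = X](bigD1 i) //= !mxE eqxx /= subrr mulr0 add0r.
  rewrite mul1r (bigD1 i) //= (addrC (a i i)) addrK mulr_suml -big_split /=.
  apply: eq_bigr => j /negbTE ji.
  rewrite !mxE eq_sym ji /= mul0r sub0r /c; ring.
have E2 : \sum_(i < n) \sum_(j < n) a i j * (c i i - c i j) =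
   \sum_(i < n) \sum_(j < n) a i j * (c j j - c i j).
  rewrite exchange_big /=; apply: eq_bigr => i _; apply: eq_bigr => j _.
  by rewrite As /c cdotC.
rewrite E.
suff : 0 <= 2 * \sum_(i < n) \sum_(j < n) a i j * (c i i - c i j) by lra.
rewrite mulr2n mulrDl mul1r {2}E2 -big_split /=; apply: sumr_ge0 => i _.
rewrite -big_split /=; apply: sumr_ge0 => j _.
have -> : a i j * (c i i - c i j) + a i j * (c j j - c i j) =
  a i j * cdot (u i - u j) (u i - u j) by rewrite /c; cdot_ring.
by rewrite mulr_ge0 // cdot_ge0.
Qed.

Theorem lemma6 (R : realType) (n m : nat) (q : 'I_n -> nat)
  (a : 'M[R]_n)
  (Ha_sym : forall i j, a i j = a j i)
  (Ha_nn : forall i j, 0 <= a i j)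
  (Hconn : forall i j : 'I_n, connect (fun k l => 0 < a k l) i j)
  (Om U : forall i : 'I_n, set 'cV[R]_(q i))
  (HOm_closed : forall i, closed (Om i))
  (HOm_conv : forall i, convex_set' (Om i))
  (f : forall i : 'I_n, 'cV[R]_(q i) -> R)
  (HU_open : forall i, open (U i))
  (HU_conv : forall i, convex_set' (U i))
  (HOmU : forall i, Om i `<=` U i)
  (Hf_sc : forall i, strictly_convex_on (U i) (f i))
  (W : forall i : 'I_n, 'M[R]_(m, q i))
  (d : vecL R n m) (d0 : 'cV[R]_m)
  (Hd : \sum_(i < n) d i = d0)
  (Hslater : exists x : vecX R q,
     (forall i, interior (Om i) (x i)) /\ WX W x = d0)
  (xstar : vecX R q)
  (Hxstar_feas : (forall i, Om i (xstar i)) /\ WX W xstar = d0)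
  (Hxstar_opt : forall x : vecX R q, (forall i, Om i (x i)) -> WX W x = d0 ->
     fsum f xstar <= fsum f x)
  (ystar : vecX R q) (lamstar zstar : vecL R n m)
  (Heq : Fmap (laplacian a) Om U f W d (ystar, lamstar, zstar) szero)
  (Hxs : projX Om ystar = xstar)
  (y : vecX R q) (lam z : vecL R n m) (aa : R)
  (Ha : lie_deriv (Fmap (laplacian a) Om U f W d)
          (Vfun Om ystar lamstar zstar) (y, lam, z) aa) :
  exists g gstar : vecX R q,
    subdiffX U f (projX Om y) g /\ subdiffX U f xstar gstar /\
    aa <= - dotX (subX (projX Om y) xstar) (subX g gstar)
          - dotL lam (lapL (laplacian a) lam) /\
    - dotX (subX (projX Om y) xstar) (subX g gstar)
          - dotL lam (lapL (laplacian a) lam) <= 0.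

Proof.
have Omne i : Om i (xstar i) := Hxstar_feas.1 i.
have Pspec i u : is_proj (Om i) u (Defs.proj (Om i) u) := @proj_spec _ _ _ (xstar i) u (HOm_closed i) (Omne i).
set Ln := laplacian a.
have Lsym : forall i j, Ln i j = Ln j i.
  move=> i j; rewrite /Ln !mxE; have [->|ij] := eqVneq i j; first by [].
  by rewrite !mul0r Ha_sym.
case: Ha => v /= [g [Hg ->]] Hp.
case: Heq => gs [Hgs Heq0].
rewrite Hxs in Hgs Heq0.
have e1 i : - ystar i + xstar i - gs i + (W i)^T *m lamstar i = 0.
  by have := congr1 (fun s : state R m q => s.1.1 i) Heq0.
have e2 i : d i - W i *m xstar i - lapL Ln lamstar i - lapL Ln zstar i = 0.
  by have := congr1 (fun s : state R m q => s.1.2 i) Heq0.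
have e3 i : lapL Ln lamstar i = 0.
  by have := congr1 (fun s : state R m q => s.2 i) Heq0.
have xsP i : is_proj (Om i) (ystar i) (xstar i).
  by rewrite -Hxs; exact: Pspec.
set x := projX Om y.
have xP i : is_proj (Om i) (y i) (x i) by exact: Pspec.
exists g, gs.
have xOm i : Om i (x i) := (xP i).1.
have mono : 0 <= dotX (subX x xstar) (subX g gs).
  have h1 := Hg xstar (fun i => HOmU i _ (Omne i)).
  have h2 := Hgs x (fun i => HOmU i _ (xOm i)).
  have : dotX (subX x xstar) (subX g gs) = - dotX g (subX xstar x) - dotX gs (subX x xstar).
    by sum_ring.
  rewrite /x in h1 *; lra.
have Lpos : 0 <= dotL lam (lapL Ln lam) by exact: lap_pos.
pose p0 : state R m q := (subX x xstar, subL lam lamstar, subL z zstar).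
have Cl : clarke_grad (Vfun Om ystar lamstar zstar) (y, lam, z) p0.
  move=> w eps eps0 del del0; exists (y, lam, z), (del / 2).
  have -> : snorm (ssub (y, lam, z) (y, lam, z)) = 0.
    rewrite /snorm /sdot /= /dotX /dotL !big1 ?addr0 ?sqrtr0 // => i _;
    rewrite /subX /subL; cdot_ring.
  split => //; split; first by apply/andP; split; lra.
  set t := del / 2.
  have t0 : 0 < t by rewrite /t; lra.
  rewrite /Vfun /= Hxs ltr_pdivlMr //.
  set yp := (fun i : 'I_n => y i + t *: w.1.1 i).
  set lp := (fun i : 'I_n => lam i + t *: w.1.2 i).
  set zp := (fun i : 'I_n => z i + t *: w.2 i).
  have SY : t * dotX (subX x xstar) w.1.1 <= 2^-1 * ((dotX (subX yp xstar) (subX yp xstar)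
     - dotX (subX yp (projX Om yp)) (subX yp (projX Om yp)))
     - (dotX (subX y xstar) (subX y xstar) - dotX (subX y x) (subX y x))).
    rewrite /dotX -!sumrB !mulr_sumr; apply: ler_sum => i _; rewrite /subX /projX /yp /=.
    have hp := (Pspec i (y i + t *: w.1.1 i)).2 (x i) (xOm i).
    have i1 := @I1 _ _ (y i) (xstar i) (w.1.1 i) t.
    have i2 := @I1 _ _ (y i) (x i) (w.1.1 i) t.
    have i3 : cdot (y i - xstar i) (w.1.1 i) - cdot (y i - x i) (w.1.1 i) =
      cdot (x i - xstar i) (w.1.1 i) by cdot_ring.
    rewrite /x /projX /= in hp i2 i3 *; rewrite -i3 mulrBr; lra.
  have Lm (u us ww : vecL R n m) : t * dotL (subL u us) ww <=
      2^-1 * dotL (subL (fun i => u i + t *: ww i) us) (subL (fun i => u i + t *: ww i) us)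
      - 2^-1 * dotL (subL u us) (subL u us).
    rewrite /dotL !mulr_sumr -sumrB; apply: ler_sum => i _; rewrite /subL /=.
    have i1 := @I1 _ _ (u i) (us i) (ww i) t.
    have := mulr_ge0 (sqr_ge0 t) (@cdot_ge0 _ _ (ww i)).
    lra.
  have SL := Lm lam lamstar w.1.2.
  have SZ := Lm z zstar w.2.
  have et : 0 < eps * t by rewrite mulr_gt0.
  rewrite /sdot /p0 /=.
  rewrite /x /projX /lp /zp /yp /= in SY SL SZ *.
  lra.
have Haa := Hp p0 Cl.
have hA i : cdot (x i - xstar i) (- y i + x i - g i + (W i)^T *m lam i) =
   cdot (y i - x i) (xstar i - x i) + cdot (ystar i - xstar i) (x i - xstar i)
   - cdot (x i - xstar i) (g i - gs i)
   + cdot (W i *m (x i - xstar i)) (lam i - lamstar i).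
  have z1 : cdot (x i - xstar i) (- ystar i + xstar i - gs i + (W i)^T *m lamstar i) = 0.
    by rewrite e1 cdot0r.
  have h : cdot (x i - xstar i) (- y i + x i - g i + (W i)^T *m lam i)
     - cdot (x i - xstar i) (- ystar i + xstar i - gs i + (W i)^T *m lamstar i) =
   cdot (y i - x i) (xstar i - x i) + cdot (ystar i - xstar i) (x i - xstar i)
   - cdot (x i - xstar i) (g i - gs i)
   + cdot (W i *m (x i - xstar i)) (lam i - lamstar i).
    by rewrite -cdot_mx mulmxBr; cdot_ring.
  by rewrite z1 subr0 in h.
have hB i : cdot (lam i - lamstar i) (d i - W i *m x i - lapL Ln lam i - lapL Ln z i) =
   - cdot (W i *m (x i - xstar i)) (lam i - lamstar i)
   - cdot (lam i - lamstar i) (lapL Ln lam i) - cdot (lam i - lamstar i) (lapL Ln z i)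
   + cdot (lam i - lamstar i) (lapL Ln zstar i).
  have z2 : cdot (lam i - lamstar i) (d i - W i *m xstar i - lapL Ln lamstar i - lapL Ln zstar i) = 0.
    by rewrite e2 cdot0r.
  have h : cdot (lam i - lamstar i) (d i - W i *m x i - lapL Ln lam i - lapL Ln z i)
     - cdot (lam i - lamstar i) (d i - W i *m xstar i - lapL Ln lamstar i - lapL Ln zstar i) =
   - cdot (W i *m (x i - xstar i)) (lam i - lamstar i)
   - cdot (lam i - lamstar i) (lapL Ln lam i) - cdot (lam i - lamstar i) (lapL Ln z i)
   + cdot (lam i - lamstar i) (lapL Ln zstar i) + cdot (lam i - lamstar i) (lapL Ln lamstar i).
    move: (lapL Ln lam i) (lapL Ln z i) (lapL Ln lamstar i) (lapL Ln zstar i) => A1 A2 A3 A4.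
    by rewrite mulmxBr; cdot_ring.
  by rewrite z2 subr0 e3 cdot0r addr0 in h.
have Eaa : aa = \sum_(i < n) (cdot (y i - x i) (xstar i - x i) + cdot (ystar i - xstar i) (x i - xstar i))
   - dotX (subX x xstar) (subX g gs)
   - (dotL (subL lam lamstar) (lapL Ln lam) + dotL (subL lam lamstar) (lapL Ln z)
      - dotL (subL lam lamstar) (lapL Ln zstar) - dotL (subL z zstar) (lapL Ln lam)).
  rewrite -Haa /sdot /p0 /= /dotX /dotL /subX /subL; apply/eqP; rewrite -subr_eq0; apply/eqP.
  rewrite ?opprD ?opprK ?mulrDr ?mulrN ?mulr_sumr -?sumrN -?big_split -?sumrB ?subr0 /=.
  rewrite big1 // => i _.
  rewrite hA hB; ring.
have SVI : \sum_(i < n) (cdot (y i - x i) (xstar i - x i) + cdot (ystar i - xstar i) (x i - xstar i)) <= 0.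
  apply: sumr_le0 => i _.
  have := @var_ineq _ _ _ _ _ _ (HOm_conv i) (xP i) (Omne i).
  have := @var_ineq _ _ _ _ _ _ (HOm_conv i) (xsP i) (xOm i).
  lra.
have dsub (u1 u2 u3 : vecL R n m) : dotL (subL u1 u2) u3 = dotL u1 u3 - dotL u2 u3.
  by sum_ring.
have B0 (u : vecL R n m) : dotL u (lapL Ln lamstar) = 0.
  by rewrite /dotL big1 // => i _; rewrite e3 cdot0r.
have Lapid : dotL (subL lam lamstar) (lapL Ln lam) + dotL (subL lam lamstar) (lapL Ln z)
      - dotL (subL lam lamstar) (lapL Ln zstar) - dotL (subL z zstar) (lapL Ln lam)
      = dotL lam (lapL Ln lam).
  rewrite !dsub (@lap_sym _ _ _ Ln lamstar lam Lsym) (@lap_sym _ _ _ Ln lamstar z Lsym).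
  rewrite (@lap_sym _ _ _ Ln lamstar zstar Lsym) !B0 (@lap_sym _ _ _ Ln zstar lam Lsym).
  rewrite (@lap_sym _ _ _ Ln z lam Lsym); lra.
split; first exact: Hg.
split; first exact: Hgs.
rewrite Eaa Lapid; split; lra.
Qed.
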